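(* Let $\mathfrak p\in\mathbb R[x,y,z]$ be a polynomial of total degree at most $3$ and let $\mathcal V(\nabla\mathfrak p)=\{u\in\mathbb R^3:\nabla\mathfrak p(u)=0\}$. Let $m\in\mathcal V(\nabla\mathfrak p)$ be a local extremum of $\mathfrak p$ and let $\mathcal C\subset\mathcal V(\nabla\mathfrak p)$ be a path-connected component containing $m$. Then $\mathrm{aff}(\mathcal C)\subset\mathcal V(\nabla\mathfrak p)$.
   Context: $\mathrm{aff}$ denotes affine hull. *)

(* Defs.v *)
From Stdlib Require Import Reals Lra List.
Open Scope R_scope.

Definition R3 : Type := (R * R * R)%type.

Definition dist3 (u v : R3) : R :=
  let '(x1, y1, z1) := u in let '(x2, y2, z2) := v in
  sqrt ((x1 - x2) ^ 2 + (y1 - y2) ^ 2 + (z1 - z2) ^ 2).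

(* A real polynomial in x,y,z of total degree <= 3 is given by its
   coefficients c i j k (coefficient of x^i y^j z^k), with
   c i j k = 0 whenever i + j + k > 3; only i,j,k <= 3 can then be nonzero. *)
Definition deg_le3 (c : nat -> nat -> nat -> R) : Prop :=
  forall i j k : nat, (3 < i + j + k)%nat -> c i j k = 0.

Definition sum3 (f : nat -> nat -> nat -> R) : R :=
  sum_f_R0 (fun i => sum_f_R0 (fun j => sum_f_R0 (fun k => f i j k) 3) 3) 3.

Definition peval (c : nat -> nat -> nat -> R) (u : R3) : R :=
  let '(x, y, z) := u in
  sum3 (fun i j k => c i j k * x ^ i * y ^ j * z ^ k).

(* Partial derivatives of the polynomial (formal = analytic derivatives). *)
Definition pdx (c : nat -> nat -> nat -> R) (u : R3) : R :=
  let '(x, y, z) := u in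
  sum3 (fun i j k => c i j k * INR i * x ^ (i - 1) * y ^ j * z ^ k).
Definition pdy (c : nat -> nat -> nat -> R) (u : R3) : R :=
  let '(x, y, z) := u in
  sum3 (fun i j k => c i j k * x ^ i * (INR j * y ^ (j - 1)) * z ^ k).
Definition pdz (c : nat -> nat -> nat -> R) (u : R3) : R :=
  let '(x, y, z) := u in
  sum3 (fun i j k => c i j k * x ^ i * y ^ j * (INR k * z ^ (k - 1))).

Definition Vgrad (c : nat -> nat -> nat -> R) (u : R3) : Prop :=
  pdx c u = 0 /\ pdy c u = 0 /\ pdz c u = 0.

Definition local_extremum (c : nat -> nat -> nat -> R) (m : R3) : Prop :=
  (exists eps, 0 < eps /\ forall u, dist3 u m < eps -> peval c m <= peval c u) \/
  (exists eps, 0 < eps /\ forall u, dist3 u m < eps -> peval c u <= peval c m).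

Definition path_in (S : R3 -> Prop) (a b : R3) : Prop :=
  exists gamma : R -> R3,
    gamma 0 = a /\ gamma 1 = b /\
    (forall t, 0 <= t <= 1 -> S (gamma t)) /\
    (forall t, 0 <= t <= 1 -> forall eps, 0 < eps ->
       exists delta, 0 < delta /\
         forall s, 0 <= s <= 1 -> Rabs (s - t) < delta ->
           dist3 (gamma s) (gamma t) < eps).

Definition path_component (S : R3 -> Prop) (m : R3) (u : R3) : Prop :=
  S u /\ path_in S m u.

Definition add3 (u v : R3) : R3 :=
  let '(x1, y1, z1) := u in let '(x2, y2, z2) := v in (x1 + x2, y1 + y2, z1 + z2).
Definition scal3 (a : R) (u : R3) : R3 :=
  let '(x, y, z) := u in (a * x, a * y, a * z).

Definition aff (C : R3 -> Prop) (u : R3) : Prop :=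
  exists l : list (R * R3),
    Forall (fun wv => C (snd wv)) l /\
    fold_right (fun wv s => fst wv + s) 0 l = 1 /\
    u = fold_right (fun wv s => add3 (scal3 (fst wv) (snd wv)) s) (0, 0, 0) l.

(* Main.v *)
Require Import Defs.
From Stdlib Require Import Reals Lra Lia Psatz List Classical.
Open Scope R_scope.
Definition cf (c : nat -> nat -> nat -> R) (i j k : nat) : R := c i j k.
Arguments cf c (i j k)%_nat.
Definition Pf (c : nat -> nat -> nat -> R) (x y z : R) : R :=
  cf c 0 0 0 + cf c 1 0 0 * x + cf c 0 1 0 * y + cf c 0 0 1 * z
  + cf c 2 0 0 * x^2 + cf c 1 1 0 * x * y + cf c 1 0 1 * x * z + cf c 0 2 0 * y^2 + cf c 0 1 1 * y * z + cf c 0 0 2 * z^2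
  + cf c 3 0 0 * x^3 + cf c 2 1 0 * x^2 * y + cf c 2 0 1 * x^2 * z + cf c 1 2 0 * x * y^2 + cf c 1 1 1 * x * y * z
  + cf c 1 0 2 * x * z^2 + cf c 0 3 0 * y^3 + cf c 0 2 1 * y^2 * z + cf c 0 1 2 * y * z^2 + cf c 0 0 3 * z^3.
Definition Gx (c : nat -> nat -> nat -> R) (x y z : R) : R :=
  cf c 1 0 0 + 2 * cf c 2 0 0 * x + cf c 1 1 0 * y + cf c 1 0 1 * z + 3 * cf c 3 0 0 * x^2
  + 2 * cf c 2 1 0 * x * y + 2 * cf c 2 0 1 * x * z + cf c 1 2 0 * y^2 + cf c 1 1 1 * y * z + cf c 1 0 2 * z^2.
Definition Gy (c : nat -> nat -> nat -> R) (x y z : R) : R :=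
  cf c 0 1 0 + cf c 1 1 0 * x + 2 * cf c 0 2 0 * y + cf c 0 1 1 * z + cf c 2 1 0 * x^2
  + 2 * cf c 1 2 0 * x * y + cf c 1 1 1 * x * z + 3 * cf c 0 3 0 * y^2 + 2 * cf c 0 2 1 * y * z + cf c 0 1 2 * z^2.
Definition Gz (c : nat -> nat -> nat -> R) (x y z : R) : R :=
  cf c 0 0 1 + cf c 1 0 1 * x + cf c 0 1 1 * y + 2 * cf c 0 0 2 * z + cf c 2 0 1 * x^2
  + cf c 1 1 1 * x * y + 2 * cf c 1 0 2 * x * z + cf c 0 2 1 * y^2 + 2 * cf c 0 1 2 * y * z + 3 * cf c 0 0 3 * z^2.
Ltac kill H := repeat match goal with |- context [?c ?i ?j ?k] =>
   let h := fresh in assert (h: (3 < i+j+k)%nat) by (simpl; lia); rewrite (H i j k h); clear h end.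
Lemma peval_eq c x y z : deg_le3 c -> peval c (x,y,z) = Pf c x y z.
Proof. intros H. unfold peval, sum3, Pf, cf. simpl. kill H. ring. Qed.
Lemma pdx_eq c x y z : deg_le3 c -> pdx c (x,y,z) = Gx c x y z.
Proof. intros H. unfold pdx, sum3, Gx, cf. simpl. kill H. ring. Qed.
Lemma pdy_eq c x y z : deg_le3 c -> pdy c (x,y,z) = Gy c x y z.
Proof. intros H. unfold pdy, sum3, Gy, cf. simpl. kill H. ring. Qed.
Lemma pdz_eq c x y z : deg_le3 c -> pdz c (x,y,z) = Gz c x y z.
Proof. intros H. unfold pdz, sum3, Gz, cf. simpl. kill H. ring. Qed.
Definition Gd c b1 b2 b3 d1 d2 d3 := Gx c b1 b2 b3 * d1 + Gy c b1 b2 b3 * d2 + Gz c b1 b2 b3 * d3.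
Definition Q2 c b1 b2 b3 e1 e2 e3 :=
  (Pf c (b1+e1) (b2+e2) (b3+e3) + Pf c (b1-e1) (b2-e2) (b3-e3))/2 - Pf c b1 b2 b3.
Definition K3 c e1 e2 e3 := (Pf c e1 e2 e3 - Pf c (-e1) (-e2) (-e3))/2 - Gd c 0 0 0 e1 e2 e3.
Lemma EXP c b1 b2 b3 e1 e2 e3 s :
  Pf c (b1 + s*e1) (b2 + s*e2) (b3 + s*e3) =
  Pf c b1 b2 b3 + s * Gd c b1 b2 b3 e1 e2 e3 + s^2 * Q2 c b1 b2 b3 e1 e2 e3 + s^3 * K3 c e1 e2 e3.
Proof. unfold Q2, K3, Gd, Pf, Gx, Gy, Gz. field. Qed.
Lemma DER c b1 b2 b3 e1 e2 e3 s :
  Gd c (b1 + s*e1) (b2 + s*e2) (b3 + s*e3) e1 e2 e3 =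
  Gd c b1 b2 b3 e1 e2 e3 + 2 * s * Q2 c b1 b2 b3 e1 e2 e3 + 3 * s^2 * K3 c e1 e2 e3.
Proof. unfold Q2, K3, Gd, Pf, Gx, Gy, Gz. field. Qed.
Lemma MIX c b1 b2 b3 n1 n2 n3 d1 d2 d3 t :
  Gd c (b1 + t*n1) (b2 + t*n2) (b3 + t*n3) d1 d2 d3 =
  Gd c b1 b2 b3 d1 d2 d3 + t * (Q2 c b1 b2 b3 (n1+d1) (n2+d2) (n3+d3) - Q2 c b1 b2 b3 n1 n2 n3 - Q2 c b1 b2 b3 d1 d2 d3)
  + t^2 * (Gd c (b1+n1) (b2+n2) (b3+n3) d1 d2 d3 - Gd c b1 b2 b3 d1 d2 d3
           - (Q2 c b1 b2 b3 (n1+d1) (n2+d2) (n3+d3) - Q2 c b1 b2 b3 n1 n2 n3 - Q2 c b1 b2 b3 d1 d2 d3)).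
Proof. unfold Q2, K3, Gd, Pf, Gx, Gy, Gz. field. Qed.
Lemma QPOL c b1 b2 b3 n1 n2 n3 d1 d2 d3 t :
  Q2 c b1 b2 b3 (n1 + t*d1) (n2 + t*d2) (n3 + t*d3) =
  Q2 c b1 b2 b3 n1 n2 n3 + t * (Q2 c b1 b2 b3 (n1+d1) (n2+d2) (n3+d3) - Q2 c b1 b2 b3 n1 n2 n3 - Q2 c b1 b2 b3 d1 d2 d3)
  + t^2 * Q2 c b1 b2 b3 d1 d2 d3.
Proof. unfold Q2, K3, Gd, Pf, Gx, Gy, Gz. field. Qed.
Lemma cubic_neg A1 A2 A3 d : 0 < d -> A1 <> 0 ->
  exists s, Rabs s < d /\ A1*s + A2*s^2 + A3*s^3 < 0.
Proof.
  intros Hd Hne.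
  set (a2 := Rabs A2). set (a3 := Rabs A3).
  assert (h2 : A2 <= a2 /\ -a2 <= A2) by (unfold a2; split; [apply Rle_abs| pose proof (Rabs_pos A2); pose proof (Rle_abs (-A2)); rewrite Rabs_Ropp in *; lra]).
  assert (h3 : A3 <= a3 /\ -a3 <= A3) by (unfold a3; split; [apply Rle_abs| pose proof (Rabs_pos A3); pose proof (Rle_abs (-A3)); rewrite Rabs_Ropp in *; lra]).
  set (M := a2 + a3 + 1).
  assert (HM : 1 <= M) by (unfold M, a2, a3; pose proof (Rabs_pos A2); pose proof (Rabs_pos A3); lra).
  assert (HA : 0 < Rabs A1) by (apply Rabs_pos_lt; auto).
  set (r := Rmin (d/2) (Rmin (1/2) (Rabs A1 / (2*M)))).
  assert (r1 : r <= d/2) by apply Rmin_l.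
  assert (r2 : r <= 1/2) by (eapply Rle_trans; [apply Rmin_r| apply Rmin_l]).
  assert (r3 : r <= Rabs A1 / (2*M)) by (eapply Rle_trans; [apply Rmin_r| apply Rmin_r]).
  assert (r0 : 0 < r).
  { unfold r. apply Rmin_pos; [lra|]. apply Rmin_pos; [lra|]. apply Rdiv_lt_0_compat; lra. }
  assert (r4 : r * M <= Rabs A1 / 2).
  { apply Rmult_le_compat_r with (r := M) in r3; [|lra].
    replace (Rabs A1 / (2*M) * M) with (Rabs A1 / 2) in r3 by (field; lra). exact r3. }
  assert (Hb : a2 * r^2 + a3 * r^2 < Rabs A1 * r).
  { assert (r * (r * M) <= r * (Rabs A1 / 2)) by (apply Rmult_le_compat_l; lra).
    unfold M in *. nra. }
  destruct (Rlt_or_le 0 A1) as [Hp|Hn].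
  - exists (-r). split. { rewrite Rabs_Ropp, Rabs_right; lra. }
    rewrite Rabs_right in Hb by lra.
    assert (A2 * r^2 <= a2 * r^2) by (apply Rmult_le_compat_r; nra).
    assert (Hr3 : r^3 <= r^2) by (assert (0 < r^2) by (apply pow_lt; lra); simpl; nra).
    assert (0 < r^3) by (apply pow_lt; lra).
    assert (- A3 * r^3 <= a3 * r^3) by (apply Rmult_le_compat_r; lra).
    assert (a3 * r^3 <= a3 * r^2) by (apply Rmult_le_compat_l; [unfold a3; apply Rabs_pos| lra]).
    replace (A1 * - r + A2 * (- r) ^ 2 + A3 * (- r) ^ 3) with (- A1 * r + A2 * r^2 - A3 * r^3) by ring.
    lra.
  - assert (A1 < 0) by (destruct Hn; [lra| subst; contradiction]).
    exists r. split. { rewrite Rabs_right; lra. }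
    rewrite Rabs_left in Hb by lra.
    assert (A2 * r^2 <= a2 * r^2) by (apply Rmult_le_compat_r; nra).
    assert (Hr3 : r^3 <= r^2) by (assert (0 < r^2) by (apply pow_lt; lra); simpl; nra).
    assert (0 < r^3) by (apply pow_lt; lra).
    assert (A3 * r^3 <= a3 * r^3) by (apply Rmult_le_compat_r; lra).
    assert (a3 * r^3 <= a3 * r^2) by (apply Rmult_le_compat_l; [unfold a3; apply Rabs_pos| lra]).
    lra.
Qed.
Lemma cubic_lin A1 A2 A3 d : 0 < d -> (forall s, Rabs s < d -> 0 <= A1*s + A2*s^2 + A3*s^3) -> A1 = 0.
Proof.
  intros Hd H. destruct (Req_dec A1 0) as [|Hne]; auto.
  destruct (cubic_neg A1 A2 A3 d Hd Hne) as [s [Hs Hl]]. specialize (H s Hs). lra.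
Qed.
Lemma cubic_quad A2 A3 d : 0 < d -> (forall s, Rabs s < d -> 0 <= A2*s^2 + A3*s^3) -> 0 <= A2.
Proof.
  intros Hd H. destruct (Rle_or_lt 0 A2) as [|Hneg]; auto. exfalso.
  set (a3 := Rabs A3).
  assert (h3 : A3 <= a3) by apply Rle_abs.
  assert (Ha3 : 0 <= a3) by apply Rabs_pos.
  set (r := Rmin (d/2) (- A2 / (2*(a3+1)))).
  assert (r1 : r <= d/2) by apply Rmin_l.
  assert (r3 : r <= - A2 / (2*(a3+1))) by apply Rmin_r.
  assert (r0 : 0 < r) by (unfold r; apply Rmin_pos; [lra| apply Rdiv_lt_0_compat; lra]).
  assert (r4 : r * (a3+1) <= - A2 / 2).
  { apply Rmult_le_compat_r with (r := a3+1) in r3; [|lra].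
    replace (- A2 / (2*(a3+1)) * (a3+1)) with (- A2 / 2) in r3 by (field; lra). exact r3. }
  specialize (H r). rewrite Rabs_right in H by lra. specialize (H ltac:(lra)).
  assert (A3 * r <= a3 * r) by nra.
  assert (0 <= r^2 * (A2 + A3 * r)) by (replace (r^2 * (A2 + A3*r)) with (A2 * r^2 + A3 * r^3) by ring; lra).
  assert (A2 + A3 * r < 0) by nra.
  assert (0 < r^2) by nra. nra.
Qed.
Lemma cubic_cub A3 d : 0 < d -> (forall s, Rabs s < d -> 0 <= A3*s^3) -> A3 = 0.
Proof.
  intros Hd H.
  pose proof (H (d/2)) as H1. pose proof (H (-(d/2))) as H2.
  rewrite Rabs_right in H1 by lra. rewrite Rabs_Ropp, Rabs_right in H2 by lra.
  specialize (H1 ltac:(lra)). specialize (H2 ltac:(lra)).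
  assert (0 < (d/2)^3) by (apply pow_lt; lra).
  replace ((-(d/2))^3) with (-((d/2)^3)) in H2 by ring. nra.
Qed.
Lemma small_off eps x1 x2 x3 s : 0 < eps ->
  Rabs s < eps / (2 * (1 + (x1^2 + x2^2 + x3^2))) ->
  (s*x1)^2 + (s*x2)^2 + (s*x3)^2 < (eps/2)^2.
Proof.
  intros He Hs. set (N := x1^2+x2^2+x3^2) in *.
  assert (HN : 0 <= N) by (unfold N; nra).
  set (dl := eps / (2 * (1 + N))) in *.
  assert (Hd : dl * (1+N) = eps/2) by (unfold dl; field; lra).
  assert (s^2 < dl^2) by (rewrite <- pow2_abs; pose proof (Rabs_pos s); nra).
  replace ((s*x1)^2 + (s*x2)^2 + (s*x3)^2) with (s^2 * N) by (unfold N; ring).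
  assert (s^2 * N <= dl^2 * N) by nra.
  assert (dl^2 * N < dl^2 * (1+N)^2).
  { assert (0 < dl) by (unfold dl; apply Rdiv_lt_0_compat; lra). nra. }
  replace (dl^2 * (1+N)^2) with ((eps/2)^2) in * by (rewrite <- Hd; ring). lra.
Qed.
Definition MinAt c m1 m2 m3 eps := 0 < eps /\
  (forall w1 w2 w3, w1^2+w2^2+w3^2 < eps^2 -> Pf c m1 m2 m3 <= Pf c (m1+w1) (m2+w2) (m3+w3)) /\
  Gx c m1 m2 m3 = 0 /\ Gy c m1 m2 m3 = 0 /\ Gz c m1 m2 m3 = 0.

Lemma Gd0 c m1 m2 m3 eps x1 x2 x3 : MinAt c m1 m2 m3 eps -> Gd c m1 m2 m3 x1 x2 x3 = 0.
Proof. intros (_&_&h1&h2&h3). unfold Gd. rewrite h1,h2,h3. ring. Qed.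

Lemma dir c m1 m2 m3 eps x1 x2 x3 s : MinAt c m1 m2 m3 eps ->
  Rabs s < eps / (2 * (1 + (x1^2 + x2^2 + x3^2))) ->
  0 <= s^2 * Q2 c m1 m2 m3 x1 x2 x3 + s^3 * K3 c x1 x2 x3.
Proof.
  intros HM Hs. pose proof (Gd0 _ _ _ _ _ x1 x2 x3 HM) as G.
  destruct HM as (He & Hmin & _).
  pose proof (small_off eps x1 x2 x3 s He Hs).
  specialize (Hmin (s*x1) (s*x2) (s*x3) ltac:(nra)).
  rewrite EXP, G in Hmin. lra.
Qed.

Lemma dl_pos eps x1 x2 x3 : 0 < eps -> 0 < eps / (2 * (1 + (x1^2 + x2^2 + x3^2))).
Proof. intros. apply Rdiv_lt_0_compat; [lra|]. nra. Qed.

Lemma psd c m1 m2 m3 eps x1 x2 x3 : MinAt c m1 m2 m3 eps -> 0 <= Q2 c m1 m2 m3 x1 x2 x3.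
Proof.
  intros HM. apply (cubic_quad _ (K3 c x1 x2 x3) (eps / (2 * (1 + (x1^2 + x2^2 + x3^2))))).
  - apply dl_pos. apply HM.
  - intros s Hs. pose proof (dir _ _ _ _ _ _ _ _ s HM Hs). nra.
Qed.

Lemma kerK c m1 m2 m3 eps x1 x2 x3 : MinAt c m1 m2 m3 eps -> Q2 c m1 m2 m3 x1 x2 x3 = 0 -> K3 c x1 x2 x3 = 0.
Proof.
  intros HM HQ. apply (cubic_cub _ (eps / (2 * (1 + (x1^2 + x2^2 + x3^2))))).
  - apply dl_pos. apply HM.
  - intros s Hs. pose proof (dir _ _ _ _ _ _ _ _ s HM Hs). rewrite HQ in H. nra.
Qed.

Definition Bf c m1 m2 m3 n1 n2 n3 d1 d2 d3 :=
  Q2 c m1 m2 m3 (n1+d1) (n2+d2) (n3+d3) - Q2 c m1 m2 m3 n1 n2 n3 - Q2 c m1 m2 m3 d1 d2 d3.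

Lemma beta0 c m1 m2 m3 eps n1 n2 n3 d1 d2 d3 : MinAt c m1 m2 m3 eps ->
  Q2 c m1 m2 m3 n1 n2 n3 = 0 -> Bf c m1 m2 m3 n1 n2 n3 d1 d2 d3 = 0.
Proof.
  intros HM HQ. apply (cubic_lin _ (Q2 c m1 m2 m3 d1 d2 d3) 0 1); [lra|].
  intros t _. pose proof (psd _ _ _ _ _ (n1+t*d1) (n2+t*d2) (n3+t*d3) HM).
  rewrite QPOL, HQ in H. unfold Bf. nra.
Qed.

Lemma QHOM c m1 m2 m3 a x1 x2 x3 : Q2 c m1 m2 m3 (a*x1) (a*x2) (a*x3) = a^2 * Q2 c m1 m2 m3 x1 x2 x3.
Proof. unfold Q2, Pf, cf. field. Qed.

Lemma ker_comb c m1 m2 m3 eps a b n1 n2 n3 k1 k2 k3 : MinAt c m1 m2 m3 eps ->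
  Q2 c m1 m2 m3 n1 n2 n3 = 0 -> Q2 c m1 m2 m3 k1 k2 k3 = 0 ->
  Q2 c m1 m2 m3 (a*n1 + b*k1) (a*n2 + b*k2) (a*n3 + b*k3) = 0.
Proof.
  intros HM H1 H2.
  assert (Ha : Q2 c m1 m2 m3 (a*n1) (a*n2) (a*n3) = 0) by (rewrite QHOM, H1; ring).
  assert (Hb : Q2 c m1 m2 m3 (b*k1) (b*k2) (b*k3) = 0) by (rewrite QHOM, H2; ring).
  pose proof (beta0 _ _ _ _ _ _ _ _ (b*k1) (b*k2) (b*k3) HM Ha) as HB.
  unfold Bf in HB. lra.
Qed.

Lemma VN c m1 m2 m3 eps n1 n2 n3 d1 d2 d3 : MinAt c m1 m2 m3 eps ->
  Q2 c m1 m2 m3 n1 n2 n3 = 0 -> Gd c (m1+n1) (m2+n2) (m3+n3) d1 d2 d3 = 0.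
Proof.
  intros HM HQ.
  pose proof (fun x1 x2 x3 => Gd0 c m1 m2 m3 eps x1 x2 x3 HM) as G0.
  pose proof (kerK _ _ _ _ _ _ _ _ HM HQ) as HK.
  pose proof (beta0 _ _ _ _ _ _ _ _ d1 d2 d3 HM HQ) as HB.
  assert (He : 0 < eps) by apply HM.
  set (t0 := eps / (2 * (1 + (n1^2 + n2^2 + n3^2))) / 2).
  assert (Ht0 : 0 < t0) by (unfold t0; pose proof (dl_pos eps n1 n2 n3 He); lra).
  assert (Hn : (t0*n1)^2 + (t0*n2)^2 + (t0*n3)^2 < (eps/2)^2).
  { apply small_off; auto. rewrite Rabs_right by lra. unfold t0. pose proof (dl_pos eps n1 n2 n3 He); lra. }
  set (g := Gd c (m1+n1) (m2+n2) (m3+n3) d1 d2 d3).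
  assert (A : t0^2 * g = 0).
  { apply (cubic_lin _ (Q2 c (m1+t0*n1) (m2+t0*n2) (m3+t0*n3) d1 d2 d3) (K3 c d1 d2 d3)
      (eps / (2 * (1 + (d1^2 + d2^2 + d3^2))))).
    - apply dl_pos; auto.
    - intros s Hs.
      pose proof (small_off eps d1 d2 d3 s He Hs) as Hd.
      destruct HM as (_ & Hmin & Hm1 & Hm2 & Hm3).
      assert (Hsum : (t0*n1 + s*d1)^2 + (t0*n2 + s*d2)^2 + (t0*n3 + s*d3)^2 < eps^2).
      { assert (forall a b, (a+b)^2 <= 2*a^2 + 2*b^2) by (intros a b; pose proof (pow2_ge_0 (a-b)); nra).
        pose proof (H (t0*n1) (s*d1)); pose proof (H (t0*n2) (s*d2)); pose proof (H (t0*n3) (s*d3)).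
        assert ((eps/2)^2 * 4 = eps^2) by field. lra. }
      specialize (Hmin (t0*n1 + s*d1) (t0*n2 + s*d2) (t0*n3 + s*d3) Hsum).
      replace (m1 + (t0*n1 + s*d1)) with ((m1 + t0*n1) + s*d1) in Hmin by ring.
      replace (m2 + (t0*n2 + s*d2)) with ((m2 + t0*n2) + s*d2) in Hmin by ring.
      replace (m3 + (t0*n3 + s*d3)) with ((m3 + t0*n3) + s*d3) in Hmin by ring.
      rewrite EXP, EXP, MIX in Hmin.
      rewrite HQ, HK in Hmin. unfold Bf in HB. rewrite HQ in HB. rewrite HB in Hmin.
      rewrite !G0 in Hmin.
      replace (m1 + 1*n1) with (m1+n1) in Hmin by ring.
      replace (m2 + 1*n2) with (m2+n2) in Hmin by ring.
      replace (m3 + 1*n3) with (m3+n3) in Hmin by ring.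
      fold g in Hmin. lra. }
  assert (0 < t0^2) by (apply pow_lt; lra).
  fold g. nra.
Qed.
Definition Crit c a1 a2 a3 := Gx c a1 a2 a3 = 0 /\ Gy c a1 a2 a3 = 0 /\ Gz c a1 a2 a3 = 0.
Lemma Crit_Gd c a1 a2 a3 d1 d2 d3 : Crit c a1 a2 a3 -> Gd c a1 a2 a3 d1 d2 d3 = 0.
Proof. intros (h1&h2&h3). unfold Gd. rewrite h1,h2,h3. ring. Qed.

Ltac simp1 H := repeat match type of H with context [?m + 1 * (?u - ?m)] =>
   replace (m + 1*(u-m)) with u in H by ring end.

Lemma S0Q c m1 m2 m3 eps a1 a2 a3 : MinAt c m1 m2 m3 eps -> Crit c a1 a2 a3 ->
  Pf c a1 a2 a3 = Pf c m1 m2 m3 -> Q2 c m1 m2 m3 (a1-m1) (a2-m2) (a3-m3) = 0.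
Proof.
  intros HM Ha Hp.
  pose proof (DER c m1 m2 m3 (a1-m1) (a2-m2) (a3-m3) 1) as D. simp1 D.
  pose proof (EXP c m1 m2 m3 (a1-m1) (a2-m2) (a3-m3) 1) as E. simp1 E.
  rewrite (Crit_Gd _ _ _ _ _ _ _ Ha) in D. rewrite (Gd0 _ _ _ _ _ _ _ _ HM) in D, E.
  lra.
Qed.

Lemma Lloc c m1 m2 m3 eps a1 a2 a3 u1 u2 u3 : MinAt c m1 m2 m3 eps -> Crit c a1 a2 a3 ->
  Pf c a1 a2 a3 = Pf c m1 m2 m3 -> Crit c u1 u2 u3 ->
  4 * ((u1-a1)^2 + (u2-a2)^2 + (u3-a3)^2) < eps^2 -> Pf c u1 u2 u3 = Pf c m1 m2 m3.
Proof.
  intros HM Ha Hp Hu Hd.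
  pose proof (S0Q _ _ _ _ _ _ _ _ HM Ha Hp) as HQn.
  pose proof (DER c m1 m2 m3 (u1-m1) (u2-m2) (u3-m3) 1) as D1. simp1 D1.
  pose proof (EXP c m1 m2 m3 (u1-m1) (u2-m2) (u3-m3) 1) as E1. simp1 E1.
  rewrite (Crit_Gd _ _ _ _ _ _ _ Hu) in D1. rewrite (Gd0 _ _ _ _ _ _ _ _ HM) in D1, E1.
  pose proof (DER c a1 a2 a3 (u1-a1) (u2-a2) (u3-a3) 1) as D2. simp1 D2.
  pose proof (EXP c a1 a2 a3 (u1-a1) (u2-a2) (u3-a3) 1) as E2. simp1 E2.
  rewrite (Crit_Gd _ _ _ _ _ _ _ Hu) in D2. rewrite (Crit_Gd _ _ _ _ _ _ _ Ha) in D2, E2.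
  pose proof (QPOL c m1 m2 m3 (a1-m1) (a2-m2) (a3-m3) (u1-a1) (u2-a2) (u3-a3) 1) as QP.
  replace (a1 - m1 + 1 * (u1 - a1)) with (u1 - m1) in QP by ring.
  replace (a2 - m2 + 1 * (u2 - a2)) with (u2 - m2) in QP by ring.
  replace (a3 - m3 + 1 * (u3 - a3)) with (u3 - m3) in QP by ring.
  pose proof (beta0 _ _ _ _ _ _ _ _ (u1-a1) (u2-a2) (u3-a3) HM HQn) as HB. unfold Bf in HB.
  pose proof (psd _ _ _ _ _ (u1-a1) (u2-a2) (u3-a3) HM) as Hps.
  pose proof (fun x1 x2 x3 => Gd0 c m1 m2 m3 eps x1 x2 x3 HM) as G0.
  destruct HM as (He & Hmin & _).
  pose proof (Hmin (2*(u1-a1)) (2*(u2-a2)) (2*(u3-a3)) ltac:(nra)) as Hm.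
  rewrite EXP, G0 in Hm.
  lra.
Qed.

Lemma dist_sq x1 y1 z1 x2 y2 z2 r : dist3 (x1,y1,z1) (x2,y2,z2) < r ->
  (x1-x2)^2 + (y1-y2)^2 + (z1-z2)^2 < r^2.
Proof.
  unfold dist3. intros H. set (S := (x1-x2)^2 + (y1-y2)^2 + (z1-z2)^2) in *.
  assert (0 <= S) by (unfold S; pose proof (pow2_ge_0 (x1-x2)); pose proof (pow2_ge_0 (y1-y2)); pose proof (pow2_ge_0 (z1-z2)); lra).
  pose proof (sqrt_sqrt S H0). pose proof (sqrt_pos S).
  assert (sqrt S * sqrt S < r * r) by (apply Rmult_le_0_lt_compat; lra). simpl. lra.
Qed.

Lemma sq_dist x1 y1 z1 x2 y2 z2 r : 0 < r ->
  (x1-x2)^2 + (y1-y2)^2 + (z1-z2)^2 < r^2 -> dist3 (x1,y1,z1) (x2,y2,z2) < r.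
Proof.
  unfold dist3. intros Hr H. rewrite <- (sqrt_pow2 r) by lra.
  apply sqrt_lt_1_alt. split; [|exact H]. pose proof (pow2_ge_0 (x1-x2)); pose proof (pow2_ge_0 (y1-y2)); pose proof (pow2_ge_0 (z1-z2)); lra.
Qed.

Lemma VC c x y z : deg_le3 c -> (Vgrad c (x,y,z) <-> Crit c x y z).
Proof. intros H. unfold Vgrad, Crit. rewrite pdx_eq, pdy_eq, pdz_eq by exact H. tauto. Qed.

Lemma path_const (S G : R3 -> Prop) (m u : R3) r : 0 < r ->
  (forall a b v, S a -> G a -> S v -> dist3 v b < r -> dist3 a b < r -> G v) ->
  G m -> path_in S m u -> G u.
Proof.
  intros Hr Hprop Hm [g [H0 [H1 [HS Hc]]]].
  set (E := fun t => 0 <= t <= 1 /\ forall s, 0 <= s <= t -> G (g s)).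
  assert (HE0 : E 0).
  { split; [lra|]. intros s Hs. replace s with 0 by lra. rewrite H0. exact Hm. }
  assert (Hb : bound E) by (exists 1; intros t [Ht _]; lra).
  destruct (completeness E Hb (ex_intro _ 0 HE0)) as [T [HTub HTl]].
  assert (T0 : 0 <= T) by (apply HTub; exact HE0).
  assert (T1 : T <= 1) by (apply HTl; intros t [Ht _]; lra).
  destruct (Hc T (conj T0 T1) r Hr) as [dl [Hdl Hd]].
  assert (Ht0 : exists t0, E t0 /\ T - dl < t0).
  { apply NNPP. intros Hn.
    assert (T <= T - dl).
    { apply HTl. intros t Et. apply Rnot_lt_le. intros Hlt. apply Hn. exists t. auto. }
    lra. }
  destruct Ht0 as [t0 [[Ht0a Ht0b] Ht0c]].
  assert (t0T : t0 <= T) by (apply HTub; split; auto).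
  assert (Hgood : forall s, 0 <= s <= 1 -> s <= T + dl/2 -> G (g s)).
  { intros s Hs HsT. destruct (Rle_or_lt s t0) as [Hst|Hst].
    - apply Ht0b. lra.
    - apply (Hprop (g t0) (g T) (g s)).
      + apply HS; lra.
      + apply Ht0b; lra.
      + apply HS; lra.
      + apply Hd; [lra|]. apply Rabs_def1; lra.
      + apply Hd; [lra|]. apply Rabs_def1; lra. }
  destruct (Rle_or_lt (T + dl/2) 1) as [Hle|Hlt].
  - exfalso. assert (E (T + dl/2)).
    { split; [lra|]. intros s Hs. apply Hgood; lra. }
    apply HTub in H. lra.
  - rewrite <- H1. apply Hgood; lra.
Qed.

Lemma aff_ker c m1 m2 m3 eps (Ok : R3 -> Prop) : MinAt c m1 m2 m3 eps ->
  (forall v1 v2 v3, Ok (v1,v2,v3) -> Q2 c m1 m2 m3 (v1-m1) (v2-m2) (v3-m3) = 0) ->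
  forall l, Forall (fun wv => Ok (snd wv)) l ->
  forall U1 U2 U3, fold_right (fun wv s => add3 (scal3 (fst wv) (snd wv)) s) (0, 0, 0) l = (U1,U2,U3) ->
  let S := fold_right (fun wv s => fst wv + s) 0 l in
  Q2 c m1 m2 m3 (U1 - S*m1) (U2 - S*m2) (U3 - S*m3) = 0.
Proof.
  intros HM HOk l. induction l as [|[w [[v1 v2] v3]] l IH]; intros HF U1 U2 U3 HU S.
  - simpl in HU. injection HU as <- <- <-. unfold S; simpl.
    pose proof (QHOM c m1 m2 m3 0 0 0 0) as Z.
    replace (0*0) with 0 in Z by ring.
    replace (0 - 0*m1) with 0 by ring. replace (0 - 0*m2) with 0 by ring. replace (0 - 0*m3) with 0 by ring.
    rewrite Z. ring.
  - inversion HF as [|? ? Hh Ht]; subst. simpl in Hh.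
    simpl in HU. destruct (fold_right (fun (wv : R * R3) (s : R3) => add3 (scal3 (fst wv) (snd wv)) s) (0,0,0) l) as [[W1 W2] W3] eqn:HW.
    simpl in HU. injection HU as <- <- <-.
    specialize (IH Ht W1 W2 W3 eq_refl). simpl in IH.
    unfold S; simpl.
    set (S0 := fold_right (fun wv s => fst wv + s) 0 l) in *.
    pose proof (ker_comb c m1 m2 m3 eps w 1 (v1-m1) (v2-m2) (v3-m3) (W1 - S0*m1) (W2 - S0*m2) (W3 - S0*m3) HM (HOk _ _ _ Hh) IH) as K.
    replace (w*v1 + W1 - (w + S0)*m1) with (w*(v1-m1) + 1*(W1 - S0*m1)) by ring.
    replace (w*v2 + W2 - (w + S0)*m2) with (w*(v2-m2) + 1*(W2 - S0*m2)) by ring.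
    replace (w*v3 + W3 - (w + S0)*m3) with (w*(v3-m3) + 1*(W3 - S0*m3)) by ring.
    exact K.
Qed.

Lemma main_min c m : deg_le3 c -> Vgrad c m ->
  (exists eps, 0 < eps /\ forall u, dist3 u m < eps -> peval c m <= peval c u) ->
  forall u : R3, aff (path_component (Vgrad c) m) u -> Vgrad c u.
Proof.
  intros Hdeg Hvm [eps [He Hloc]] u Haff.
  destruct m as [[m1 m2] m3].
  assert (HM : MinAt c m1 m2 m3 eps).
  { apply (VC c m1 m2 m3 Hdeg) in Hvm. destruct Hvm as (h1&h2&h3).
    split; [exact He|]. split; [|auto].
    intros w1 w2 w3 Hw.
    specialize (Hloc (m1+w1, m2+w2, m3+w3)).
    rewrite !peval_eq in Hloc by exact Hdeg. apply Hloc.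
    apply sq_dist; [lra|].
    replace (m1+w1-m1) with w1 by ring. replace (m2+w2-m2) with w2 by ring. replace (m3+w3-m3) with w3 by ring.
    exact Hw. }
  assert (Hpc : forall v, path_component (Vgrad c) (m1,m2,m3) v -> peval c v = peval c (m1,m2,m3)).
  { intros v [Hv Hp].
    apply (path_const (Vgrad c) (fun v => peval c v = peval c (m1,m2,m3)) (m1,m2,m3) v (eps/8)); auto; [lra|].
    intros [[a1 a2] a3] [[b1 b2] b3] [[v1 v2] v3] Ha Hpa Hvv Hvb Hab.
    rewrite !(peval_eq c _ _ _ Hdeg) in Hpa. rewrite !(peval_eq c _ _ _ Hdeg).
    apply (VC c _ _ _ Hdeg) in Ha. apply (VC c _ _ _ Hdeg) in Hvv.
    apply (Lloc c m1 m2 m3 eps a1 a2 a3); auto.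
    apply dist_sq in Hvb. apply dist_sq in Hab.
    assert (H0 : forall x y z, (x-z)^2 <= 2*(x-y)^2 + 2*(z-y)^2) by (intros x y z; pose proof (pow2_ge_0 (x+z-2*y)); nra).
    pose proof (H0 v1 b1 a1). pose proof (H0 v2 b2 a2). pose proof (H0 v3 b3 a3).
    assert ((eps/8)^2 * 64 = eps^2) by field.
    assert (0 < eps^2) by nra.
    lra. }
  destruct Haff as [l [HF [Hs HU]]].
  destruct u as [[u1 u2] u3].
  assert (HQ : Q2 c m1 m2 m3 (u1 - m1) (u2 - m2) (u3 - m3) = 0).
  { pose proof (aff_ker c m1 m2 m3 eps (path_component (Vgrad c) (m1,m2,m3)) HM) as A.
    assert (HOk : forall v1 v2 v3, path_component (Vgrad c) (m1, m2, m3) (v1, v2, v3) ->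
              Q2 c m1 m2 m3 (v1 - m1) (v2 - m2) (v3 - m3) = 0).
    { intros v1 v2 v3 Hv. pose proof (Hpc _ Hv) as Hp. destruct Hv as [Hv _].
      rewrite !peval_eq in Hp by exact Hdeg. apply (VC c _ _ _ Hdeg) in Hv.
      apply (S0Q c m1 m2 m3 eps); auto. }
    specialize (A HOk l HF u1 u2 u3 (eq_sym HU)). simpl in A. rewrite Hs in A.
    replace (u1 - 1*m1) with (u1 - m1) in A by ring.
    replace (u2 - 1*m2) with (u2 - m2) in A by ring.
    replace (u3 - 1*m3) with (u3 - m3) in A by ring. exact A. }
  apply (VC c _ _ _ Hdeg).
  pose proof (VN c m1 m2 m3 eps _ _ _ 1 0 0 HM HQ) as X.
  pose proof (VN c m1 m2 m3 eps _ _ _ 0 1 0 HM HQ) as Y.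
  pose proof (VN c m1 m2 m3 eps _ _ _ 0 0 1 HM HQ) as Z.
  replace (m1 + (u1 - m1)) with u1 in X, Y, Z by ring.
  replace (m2 + (u2 - m2)) with u2 in X, Y, Z by ring.
  replace (m3 + (u3 - m3)) with u3 in X, Y, Z by ring.
  unfold Gd in X, Y, Z. unfold Crit. repeat split; lra.
Qed.

Lemma neg_peval c u : deg_le3 c -> peval (fun i j k => - c i j k) u = - peval c u.
Proof.
  intros H. assert (H' : deg_le3 (fun i j k => - c i j k)) by (intros i j k h; rewrite (H i j k h); ring).
  destruct u as [[x y] z]. rewrite !peval_eq by assumption. unfold Pf, cf. ring.
Qed.

Lemma neg_V c u : deg_le3 c -> (Vgrad (fun i j k => - c i j k) u <-> Vgrad c u).
Proof.
  intros H. assert (H' : deg_le3 (fun i j k => - c i j k)) by (intros i j k h; rewrite (H i j k h); ring).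
  destruct u as [[x y] z]. rewrite (VC _ x y z H), (VC _ x y z H').
  unfold Crit, Gx, Gy, Gz, cf. split; intros (h1&h2&h3); repeat split; lra.
Qed.

Lemma aff_mono (C1 C2 : R3 -> Prop) u : (forall v, C1 v -> C2 v) -> aff C1 u -> aff C2 u.
Proof.
  intros Hi [l [HF HR]]. exists l. split; [|exact HR].
  eapply Forall_impl; [|exact HF]. intros [w v]; simpl; auto.
Qed.

Theorem lemma4p2 (c : nat -> nat -> nat -> R) (m : R3) :
  deg_le3 c ->
  Vgrad c m ->
  local_extremum c m ->
  forall u : R3, aff (path_component (Vgrad c) m) u -> Vgrad c u.
Proof.
  intros Hdeg Hv [Hmin|Hmax] u Haff.
  - exact (main_min c m Hdeg Hv Hmin u Haff).
  - assert (H' : deg_le3 (fun i j k => - c i j k)) by (intros i j k h; rewrite (Hdeg i j k h); ring).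
    apply (neg_V c u Hdeg).
    apply (main_min _ m H').
    + apply (neg_V c m Hdeg); exact Hv.
    + destruct Hmax as [eps [He Hl]]. exists eps. split; auto.
      intros v Hd. rewrite !neg_peval by exact Hdeg. specialize (Hl v Hd). lra.
    + revert Haff. apply aff_mono. intros v [Hvv [g [g0 [g1 [gS gc]]]]].
      split; [apply (neg_V c v Hdeg); exact Hvv|].
      exists g. split; [exact g0|split; [exact g1| split; [intros tt Ht; apply (neg_V c _ Hdeg); auto | exact gc]]].
Qed.
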